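(* Let $V$ be an $R$-module that is a Whittaker module of type $\eta$, with cyclic Whittaker vector $w$. Then \[ R_w = R Z_V + R R_\eta(E). \]
   Context: Let $f\in\mathbb{C}[H]$ be a polynomial. $R=R(f)$ is the associative $\mathbb{C}$-algebra generated by $E,F,H$ with relations $EF-FE=f(H)$, $HE-EH=E$, $HF-FH=-F$; the monomials $F^iH^jE^k$ ($i,j,k\ge 0$) form a $\mathbb{C}$-basis of $R$. Let $R(E)=\mathbb{C}[E]$ be the subalgebra generated by $E$. Let $u\in\mathbb{C}[H]$ satisfy $f(H)=\tfrac12(u(H+1)-u(H))$ and $\Omega=2FE+u(H+1)$; the center $Z=Z(R)$ is the polynomial ring $\mathbb{C}[\Omega]$. Fix an algebra homomorphism $\eta:R(E)\to\mathbb{C}$ with $\eta(E)\neq 0$, and let $R_\eta(E)=\ker\eta$. A vector $v$ of an $R$-module $V$ is a Whittaker vector (of type $\eta$) if $Ev=\eta(E)v$; $V$ is a Whittaker module of type $\eta$ if $V=Rv$ for some Whittaker vector $v$ (a cyclic Whittaker vector). For an $R$-module $V$, $Z_V=\mathrm{Ann}_R(V)\cap Z(R)$, and for $w\in V$, $R_w=\mathrm{Ann}_R(w)=\{r\in R: rw=0\}$. *)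

(* Defs.v *)
From HB Require Import structures.
From mathcomp Require Import all_boot all_order all_algebra.
From mathcomp Require Import complex.
From mathcomp Require Import Rstruct.
Set Implicit Arguments. Unset Strict Implicit. Unset Printing Implicit Defensive.
Import Order.TTheory GRing.Theory Num.Theory.
Local Open Scope ring_scope.

Definition CC : Type := complex Rdefinitions.R.
Definition CC_numClosedField : numClosedFieldType := CC.

Section Defs.
Variable A : algType CC_numClosedField.

Definition PBW_basis (E F H : A) : Prop :=
  (forall a : A, exists (n : nat) (c : nat -> nat -> nat -> CC_numClosedField),
     a = \sum_(i < n) \sum_(j < n) \sum_(k < n)
           c i j k *: (F ^+ i * H ^+ j * E ^+ k)) /\
  (forall (n : nat) (c : nat -> nat -> nat -> CC_numClosedField),
     \sum_(i < n) \sum_(j < n) \sum_(k < n)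
           c i j k *: (F ^+ i * H ^+ j * E ^+ k) = 0 ->
     forall i j k, (i < n)%N -> (j < n)%N -> (k < n)%N -> c i j k = 0).

(* A is (isomorphic to) the algebra R(f): generated by E,F,H with the
   defining relations, the PBW monomials being a basis. *)
Definition is_Rf (f : {poly CC_numClosedField}) (E F H : A) : Prop :=
  [/\ E * F - F * E = horner_alg H f,
      H * E - E * H = E,
      H * F - F * H = - F
    & PBW_basis E F H].

Definition is_module (V : lmodType CC_numClosedField) (act : A -> V -> V) : Prop :=
  [/\ forall a b v, act (a + b) v = act a v + act b v,
      forall a v w, act a (v + w) = act a v + act a w,
      forall a b v, act (a * b) v = act a (act b v),
      forall v, act 1 v = v
    & forall (c : CC_numClosedField) a v, act (c *: a) v = c *: act a v].

Definition center (z : A) : Prop := forall r : A, r * z = z * r.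

Definition annV (V : lmodType CC_numClosedField) (act : A -> V -> V) (r : A) : Prop :=
  forall v, act r v = 0.

Definition Z_V (V : lmodType CC_numClosedField) (act : A -> V -> V) (z : A) : Prop :=
  annV act z /\ center z.

(* R_eta(E) = ker eta, where eta : C[E] -> C is the algebra homomorphism
   with eta(E) = a; i.e. the elements p(E) with p(a) = 0. *)
Definition ker_eta (E : A) (a : CC_numClosedField) (x : A) : Prop :=
  exists p : {poly CC_numClosedField}, p.[a] = 0 /\ x = horner_alg E p.

Definition left_ideal (S : A -> Prop) (x : A) : Prop :=
  exists (n : nat) (r s : nat -> A),
    (forall i, (i < n)%N -> S (s i)) /\ x = \sum_(i < n) r i * s i.

Definition ann_vec (V : lmodType CC_numClosedField) (act : A -> V -> V) (w : V) (r : A) : Prop :=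
  act r w = 0.

End Defs.

(* Main.v *)
Require Import Defs.
From HB Require Import structures.
From mathcomp Require Import all_boot all_order all_algebra.
Import GRing.Theory.
Local Open Scope ring_scope.

Module Helpers.
Import Num.Theory.
Set Implicit Arguments. Unset Strict Implicit. Unset Printing Implicit Defensive.

Section Main.
Variable A : algType CC_numClosedField.
Local Notation C := CC_numClosedField.
Variables E F H : A.
Hypothesis hEH : E * H = (H - 1) * E.
Hypothesis hFH : F * H = (H + 1) * F.

Lemma comm_alg (c : C) (x : A) : c%:A * x = x * c%:A.
Proof. by rewrite mulr_algl mulr_algr. Qed.

Lemma E_fac d : E * (H + d%:A) = (H + (d - 1)%:A) * E.
Proof.
rewrite mulrDr hEH -comm_alg -mulrDl; congr (_ * E).
by rewrite scalerBl scale1r addrA addrAC.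
Qed.

Lemma F_fac d : F * (H + d%:A) = (H + (d + 1)%:A) * F.
Proof.
rewrite mulrDr hFH -comm_alg -mulrDl; congr (_ * F).
by rewrite scalerDl scale1r addrA addrAC.
Qed.

Definition Q (c : C) (j : nat) : A := \prod_(i < j) (H + (c + i%:R)%:A).

Lemma Q0 c : Q c 0 = 1. Proof. by rewrite /Q big_ord0. Qed.

Lemma QSr c j : Q c j.+1 = Q c j * (H + (c + j%:R)%:A).
Proof. by rewrite /Q big_ord_recr. Qed.

Lemma QSl c j : Q c j.+1 = (H + c%:A) * Q (c + 1) j.
Proof.
rewrite /Q big_ord_recl /= addr0; congr (_ * _); apply: eq_bigr => i _.
by rewrite /bump /= mulrS addrA.
Qed.

Lemma EQ c j : E * Q c j = Q (c - 1) j * E.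
Proof.
elim: j => [|j IH]; first by rewrite !Q0 mulr1 mul1r.
by rewrite !QSr mulrA IH -mulrA E_fac mulrA addrAC.
Qed.

Lemma FQ c j : F * Q c j = Q (c + 1) j * F.
Proof.
elim: j => [|j IH]; first by rewrite !Q0 mulr1 mul1r.
by rewrite !QSr mulrA IH -mulrA F_fac mulrA addrAC.
Qed.

Lemma commHQ c j : GRing.comm H (Q c j).
Proof.
apply: commr_prod => i _; apply: commrD; first by [].
by rewrite /GRing.comm comm_alg.
Qed.

Lemma commalgQ d c j : GRing.comm (d%:A) (Q c j).
Proof. by rewrite /GRing.comm comm_alg. Qed.


Lemma QcommHd c j d : Q c j * (H + d%:A) = (H + d%:A) * Q c j.
Proof. by rewrite mulrDr mulrDl commHQ comm_alg. Qed.

Lemma diffE j : Q 0 j.+1 - Q (0 - 1) j.+1 = (j.+1)%:R *: Q 0 j.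
Proof.
rewrite [Q (0-1) _]QSl subrK [Q 0 _.+1]QSr QcommHd -mulrBl -[_ *: Q 0 j]mulr_algl; congr (_ * _).
rewrite opprD addrACA subrr add0r -scalerBl; congr (_ *: _).
by rewrite sub0r opprK add0r mulrSr.
Qed.

Lemma diffF j : Q 1 j.+1 - Q 0 j.+1 = (j.+1)%:R *: Q 1 j.
Proof.
rewrite [Q 0 _]QSl add0r [Q 1 _.+1]QSr QcommHd -mulrBl -[_ *: Q 1 j]mulr_algl; congr (_ * _).
rewrite opprD addrACA subrr add0r -scalerBl; congr (_ *: _).
by rewrite subr0 mulrS.
Qed.


Section LI.
Variable S : A -> Prop.

Lemma li0 : left_ideal S 0.
Proof. by exists 0%N, (fun _ => 0), (fun _ => 0); split => //; rewrite big_ord0. Qed.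

Lemma li_single r s : S s -> left_ideal S (r * s).
Proof.
move=> hs; exists 1%N, (fun _ => r), (fun _ => s); split => //.
by rewrite big_ord1.
Qed.

Lemma li_add x y : left_ideal S x -> left_ideal S y -> left_ideal S (x + y).
Proof.
move=> [n1 [r1 [s1 [h1 ->]]]] [n2 [r2 [s2 [h2 ->]]]].
exists (n1 + n2)%N, (fun i => if (i < n1)%N then r1 i else r2 (i - n1)%N),
  (fun i => if (i < n1)%N then s1 i else s2 (i - n1)%N); split.
  move=> i hi; case: ifP => hin; first exact: h1.
  apply: h2; rewrite ltn_subLR //; rewrite leqNgt hin //.
rewrite big_split_ord /=; congr (_ + _); apply: eq_bigr => i _ /=.
  by rewrite ltn_ord.
by rewrite ltnNge leq_addr /= addKn.
Qed.

Lemma li_mull t x : left_ideal S x -> left_ideal S (t * x).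
Proof.
move=> [n [r [s [h ->]]]]; exists n, (fun i => t * r i), s; split => //.
by rewrite mulr_sumr; apply: eq_bigr => i _; rewrite mulrA.
Qed.

Lemma li_scale c x : left_ideal S x -> left_ideal S (c *: x).
Proof. by move=> h; rewrite -mulr_algl; apply: li_mull. Qed.

Lemma li_opp x : left_ideal S x -> left_ideal S (- x).
Proof. by move=> h; rewrite -scaleN1r; apply: li_scale. Qed.

Lemma li_sub x y : left_ideal S x -> left_ideal S y -> left_ideal S (x - y).
Proof. by move=> hx hy; apply: li_add => //; apply: li_opp. Qed.

End LI.

Lemma center0 : @center A 0. Proof. by move=> r; rewrite mulr0 mul0r. Qed.
Lemma center1 : @center A 1. Proof. by move=> r; rewrite mulr1 mul1r. Qed.
Lemma centerD (x y : A) : center x -> center y -> center (x + y).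
Proof. by move=> hx hy r; rewrite mulrDr mulrDl hx hy. Qed.
Lemma centerM (x y : A) : center x -> center y -> center (x * y).
Proof. by move=> hx hy r; rewrite mulrA hx -mulrA hy mulrA. Qed.
Lemma centerZ c (x : A) : center x -> center (c *: x).
Proof. by move=> hx r; rewrite -scalerAr -scalerAl hx. Qed.

Variable V : lmodType C.
Variable act : A -> V -> V.
Hypothesis actDl : forall x y v, act (x + y) v = act x v + act y v.
Hypothesis actDr : forall x v u, act x (v + u) = act x v + act x u.
Hypothesis actM : forall x y v, act (x * y) v = act x (act y v).
Hypothesis act1 : forall v, act 1 v = v.
Hypothesis actZ : forall (c : C) x v, act (c *: x) v = c *: act x v.

Lemma act0r x : act x 0 = 0.
Proof. by apply: (addrI (act x 0)); rewrite addr0 -actDr addr0. Qed.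
Lemma act0l v : act 0 v = 0.
Proof. by apply: (addrI (act 0 v)); rewrite addr0 -actDl addr0. Qed.
Lemma actNl x v : act (- x) v = - act x v.
Proof. by apply: (addrI (act x v)); rewrite -actDl !subrr act0l. Qed.
Lemma actBl x y v : act (x - y) v = act x v - act y v.
Proof. by rewrite actDl actNl. Qed.
Lemma actZr x (c : C) v : act x (c *: v) = c *: act x v.
Proof.
have -> : c *: v = act (c%:A) v by rewrite actZ act1.
by rewrite -actM mulr_algr actZ.
Qed.
Lemma act_sum n (f : 'I_n -> A) v : act (\sum_(i < n) f i) v = \sum_(i < n) act (f i) v.
Proof. by apply: (big_morph (fun x => act x v)) => [x y|]; rewrite ?actDl ?act0l. Qed.

Variable a : C.
Hypothesis ha : a != 0.
Variable w : V.
Hypothesis hw : act E w = a *: w.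

Lemma actxE x : act (x * E) w = a *: act x w.
Proof. by rewrite actM hw actZr. Qed.

Lemma actEa0 : act (E - a%:A) w = 0.
Proof. by rewrite actBl hw actZ act1 subrr. Qed.

Lemma actEa x : act (x * (E - a%:A)) w = 0.
Proof. by rewrite actM actEa0 act0r. Qed.

Lemma horner_act p : act (horner_alg E p) w = p.[a] *: w.
Proof.
elim/poly_ind: p => [|p c IH]; first by rewrite rmorph0 act0l horner0 scale0r.
rewrite rmorphD rmorphM /= horner_algX horner_algC actDl actxE IH actZ act1.
by rewrite !hornerE scalerA scalerDl mulrC.
Qed.

Lemma kill_K x : left_ideal (ker_eta E a) x -> act x w = 0.
Proof.
move=> [n [r [s [hs ->]]]]; rewrite act_sum big1 // => i _.
have [p [hp ->]] := hs i (ltn_ord i).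
by rewrite actM horner_act hp scale0r act0r.
Qed.

Lemma kill_LZ x : left_ideal (Z_V act) x -> act x w = 0.
Proof.
move=> [n [r [s [hs ->]]]]; rewrite act_sum big1 // => i _.
have [hann _] := hs i (ltn_ord i).
by rewrite actM hann act0r.
Qed.


Definition gen n (x : A) := exists z j, center z /\ (j < n)%N /\ x = z * Q 0 j.
Definition W n (x : A) := forall S : A -> Prop, S 0 ->
  (forall x y, S x -> S y -> S (x + y)) -> (forall x, gen n x -> S x) -> S x.

Lemma W0 n : W n 0. Proof. by move=> S h0. Qed.
Lemma W_add n x y : W n x -> W n y -> W n (x + y).
Proof. by move=> hx hy S h0 hD hg; exact: (hD _ _ (hx S h0 hD hg) (hy S h0 hD hg)). Qed.
Lemma W_gen n x : gen n x -> W n x.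
Proof. by move=> hx S h0 hD hg; apply: hg. Qed.
Lemma W_gen' n z j : center z -> (j < n)%N -> W n (z * Q 0 j).
Proof. by move=> hz hj; apply: W_gen; exists z, j. Qed.

Lemma W_zero x : W 0 x -> x = 0.
Proof.
move=> hx; apply: (hx (fun x => x = 0)) => //; first by move=> ?? -> ->; rewrite addr0.
by move=> ? [z [j [_ [hj _]]]]; rewrite ltn0 in hj.
Qed.

Lemma W_mono n m x : (n <= m)%N -> W n x -> W m x.
Proof.
move=> hnm hx; apply: hx; [exact: W0 | exact: W_add|].
move=> y [z [j [hz [hj ->]]]]; apply: W_gen'; first by [].
exact: leq_trans hj hnm.
Qed.

Lemma W_scale n c x : W n x -> W n (c *: x).
Proof.
move=> hx; apply: (hx (fun x => W n (c *: x))).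
- by rewrite scaler0; apply: W0.
- by move=> y1 y2 h1 h2; rewrite scalerDr; apply: W_add.
- move=> y [z [j [hz [hj ->]]]]; rewrite scalerAl; apply: W_gen' => //.
  exact: centerZ.
Qed.

Lemma W_decomp n x : W n.+1 x ->
  exists z x', center z /\ W n x' /\ x = z * Q 0 n + x'.
Proof.
move=> hx; apply: (hx (fun x => exists z x', center z /\ W n x' /\ x = z * Q 0 n + x')).
- exists 0, 0; split; first exact: center0; split; first exact: W0.
  by rewrite mul0r addr0.
- move=> y1 y2 [z1 [x1 [hz1 [hx1 ->]]]] [z2 [x2 [hz2 [hx2 ->]]]].
  exists (z1 + z2), (x1 + x2); split; first exact: centerD.
  split; first exact: W_add.
  by rewrite mulrDl addrACA.
- move=> y [z [j [hz [hj ->]]]].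
  rewrite ltnS leq_eqVlt in hj; case/orP: hj => [/eqP -> | hj].
    exists z, 0; split => //; split; first exact: W0.
    by rewrite addr0.
  exists 0, (z * Q 0 j); split; first exact: center0.
  split; first exact: W_gen'.
  by rewrite mul0r add0r.
Qed.

Lemma shift_gen z j : center z ->
  act ((E - a%:A) * (z * Q 0 j.+1)) w = act (((- (a * j.+1%:R)) *: z) * Q 0 j) w.
Proof.
move=> hz.
have -> : (E - a%:A) * (z * Q 0 j.+1) =
   z * Q (0 - 1) j.+1 * (E - a%:A) + a *: (z * (Q (0 - 1) j.+1 - Q 0 j.+1)).
  rewrite mulrA hz -mulrA -mulrA scalerAr -mulrDr; congr (z * _).
  by rewrite mulrBl EQ mulr_algl mulrBr mulr_algr scalerBr addrA subrK.
rewrite actDl actEa add0r actZ -opprB diffE mulrN -scalerAr actNl actZ -scalerAl actZ.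
by rewrite scalerN scalerA scaleNr.
Qed.


Lemma W_shift n x : W n.+1 x ->
  exists y, W n y /\ act ((E - a%:A) * x) w = act y w.
Proof.
move=> hx; apply: (hx (fun x => exists y, W n y /\ act ((E - a%:A) * x) w = act y w)).
- by exists 0; split; [exact: W0 | rewrite mulr0 !act0l].
- move=> x1 x2 [y1 [h1 e1]] [y2 [h2 e2]]; exists (y1 + y2); split.
    exact: W_add.
  by rewrite mulrDr !actDl e1 e2.
- move=> y [z [j [hz [hj ->]]]]; case: j hj => [|j] hj.
    exists 0; split; first exact: W0.
    by rewrite Q0 mulr1 hz actEa act0l.
  exists ((- (a * j.+1%:R)) *: z * Q 0 j); split; last exact: shift_gen.
  by apply: W_gen'; [exact: centerZ | rewrite ltnS in hj].
Qed.

Lemma claim n : forall z x', center z -> W n x' ->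
  act (z * Q 0 n + x') w = 0 -> act z w = 0.
Proof.
elim: n => [|n IH] z x' hz hx' h0.
  by move: h0; rewrite (W_zero hx') addr0 Q0 mulr1.
have [y [hy ey]] := W_shift hx'.
have : act (((- (a * n.+1%:R)) *: z) * Q 0 n + y) w = 0.
  by rewrite actDl -ey -shift_gen // -actDl -mulrDr actM h0 act0r.
move/(IH _ _ (centerZ _ hz) hy); rewrite actZ => /eqP.
rewrite scaler_eq0 oppr_eq0 mulf_eq0 (negbTE ha) pnatr_eq0 /=.
by move/eqP.
Qed.

Hypothesis hcyc : forall v : V, exists r : A, v = act r w.

Lemma W_ann n x : W n x -> act x w = 0 -> left_ideal (Z_V act) x.
Proof.
elim: n x => [|n IH] x hx h0.
  by rewrite (W_zero hx); exact: li0.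
have [z [x' [hz [hx' ex]]]] := W_decomp hx.
rewrite ex in h0 *.
have hzw : act z w = 0 := claim hz hx' h0.
have hZ : Z_V act z.
  split => // v; have [r ->] := hcyc v.
  by rewrite -actM -hz actM hzw act0r.
apply: li_add; first by rewrite -hz; apply: li_single.
apply: IH => //.
have <- : act (z * Q 0 n + x') w - act (z * Q 0 n) w = act x' w.
  by rewrite actDl addrC addKr.
by rewrite h0 -hz actM hzw act0r subrr.
Qed.


Definition PolH (g : A) := forall S : A -> Prop, S 0 ->
  (forall x y, S x -> S y -> S (x + y)) -> (forall c x, S x -> S (c *: x)) ->
  (forall j, S (Q 0 j)) -> S g.

Lemma PolH0 : PolH 0. Proof. by move=> S h0. Qed.
Lemma PolH_Q j : PolH (Q 0 j). Proof. by move=> S h0 hD hZ hQ. Qed.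
Lemma PolH_add x y : PolH x -> PolH y -> PolH (x + y).
Proof. by move=> hx hy S h0 hD hZ hQ; exact: (hD _ _ (hx S h0 hD hZ hQ) (hy S h0 hD hZ hQ)). Qed.
Lemma PolH_scale c x : PolH x -> PolH (c *: x).
Proof. by move=> hx S h0 hD hZ hQ; exact: (hZ _ _ (hx S h0 hD hZ hQ)). Qed.
Lemma PolH_sub x y : PolH x -> PolH y -> PolH (x - y).
Proof. by move=> hx hy; apply: PolH_add => //; rewrite -scaleN1r; apply: PolH_scale. Qed.
Lemma PolH1 : PolH 1. Proof. by rewrite -(Q0 0); apply: PolH_Q. Qed.

Lemma PolH_commH g : PolH g -> H * g = g * H.
Proof.
move=> hg; apply: (hg (fun g => H * g = g * H)).
- by rewrite mulr0 mul0r.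
- by move=> x y hx hy; rewrite mulrDr mulrDl hx hy.
- by move=> c x hx; rewrite -scalerAr -scalerAl hx.
- by move=> j; apply: commHQ.
Qed.

Lemma PolH_Hmul g : PolH g -> PolH (H * g).
Proof.
move=> hg; apply: (hg (fun g => PolH (H * g))).
- by rewrite mulr0; apply: PolH0.
- by move=> x y hx hy; rewrite mulrDr; apply: PolH_add.
- by move=> c x hx; rewrite -scalerAr; apply: PolH_scale.
- move=> j; have -> : H * Q 0 j = Q 0 j.+1 - (0 + j%:R) *: Q 0 j.
    by rewrite QSr mulrDr mulr_algr -commHQ addrK.
  by apply: PolH_sub; [apply: PolH_Q | apply: PolH_scale; apply: PolH_Q].
Qed.

Lemma PolH_lin d g : PolH g -> PolH ((H + d%:A) * g).
Proof.
move=> hg; rewrite mulrDl mulr_algl; apply: PolH_add; first exact: PolH_Hmul.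
exact: PolH_scale.
Qed.

Lemma PolH_mul g h : PolH g -> PolH h -> PolH (g * h).
Proof.
move=> hg hh; apply: (hg (fun g => PolH (g * h))).
- by rewrite mul0r; apply: PolH0.
- by move=> x y hx hy; rewrite mulrDl; apply: PolH_add.
- by move=> c x hx; rewrite -scalerAl; apply: PolH_scale.
- move=> j; elim: j h hh => [|j IH] h hh; first by rewrite Q0 mul1r.
  by rewrite QSr -mulrA; apply: IH; apply: PolH_lin.
Qed.

Lemma PolH_Qc c j : PolH (Q c j).
Proof.
elim: j => [|j IH]; first by rewrite Q0; apply: PolH1.
by rewrite QSr QcommHd; apply: PolH_lin.
Qed.

Lemma PolH_H : PolH H.
Proof. by rewrite -(mulr1 H); apply: PolH_Hmul; apply: PolH1. Qed.

Lemma PolH_horner p : PolH (horner_alg H p).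
Proof.
elim/poly_ind: p => [|p c IH]; first by rewrite rmorph0; apply: PolH0.
rewrite rmorphD rmorphM /= horner_algX horner_algC.
apply: PolH_add; first by rewrite -PolH_commH //; apply: PolH_Hmul.
by apply: PolH_scale; apply: PolH1.
Qed.

Definition Wall (y : A) := exists n, W n y.

Lemma Wall0 : Wall 0. Proof. by exists 0%N; apply: W0. Qed.
Lemma Wall_add x y : Wall x -> Wall y -> Wall (x + y).
Proof.
move=> [n hx] [m hy]; exists (maxn n m); apply: W_add.
  by apply: W_mono hx; apply: leq_maxl.
by apply: W_mono hy; apply: leq_maxr.
Qed.
Lemma Wall_scale c x : Wall x -> Wall (c *: x).
Proof. by move=> [n hx]; exists n; apply: W_scale. Qed.

Lemma Wall_zg z g : center z -> PolH g -> Wall (z * g).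
Proof.
move=> hz hg; apply: (hg (fun g => Wall (z * g))).
- by rewrite mulr0; apply: Wall0.
- by move=> x y hx hy; rewrite mulrDr; apply: Wall_add.
- by move=> c x hx; rewrite -scalerAr; apply: Wall_scale.
- by move=> j; exists j.+1; apply: W_gen'.
Qed.

Lemma Wall_mulPol h y : PolH h -> Wall y -> Wall (h * y).
Proof.
move=> hh [n hy]; apply: (hy (fun y => Wall (h * y))).
- by rewrite mulr0; apply: Wall0.
- by move=> x1 x2 h1 h2; rewrite mulrDr; apply: Wall_add.
- move=> y' [z [j [hz [hj ->]]]].
  rewrite mulrA hz -mulrA; apply: Wall_zg => //.
  by apply: PolH_mul => //; apply: PolH_Q.
Qed.


Definition Anti (x : A) := exists v, PolH v /\
  v * E - E * v = x * E /\ F * v - v * F = F * x.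

Lemma Anti_Q j : Anti (Q 0 j).
Proof.
have hn : (j.+1%:R : C) != 0 by rewrite pnatr_eq0.
exists ((j.+1%:R)^-1 *: Q 0 j.+1); split; first by apply: PolH_scale; apply: PolH_Q.
split.
  rewrite -scalerAl -scalerAr -scalerBr EQ -mulrBl diffE -scalerAl scalerA.
  by rewrite mulVf // scale1r.
rewrite -scalerAl -scalerAr -scalerBr [F * Q 0 j.+1]FQ add0r -mulrBl diffF -scalerAl scalerA.
by rewrite mulVf // scale1r FQ add0r.
Qed.

Lemma Anti_all x : PolH x -> Anti x.
Proof.
move=> hx; apply: (hx Anti).
- by exists 0; split; [apply: PolH0 | rewrite !mulr0 !mul0r subrr].
- move=> x1 x2 [v1 [p1 [e1 f1]]] [v2 [p2 [e2 f2]]]; exists (v1 + v2).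
  split; first exact: PolH_add.
  split; first by rewrite mulrDl mulrDr opprD addrACA e1 e2 mulrDl.
  by rewrite mulrDr mulrDl opprD addrACA f1 f2 mulrDr.
- move=> c x1 [v1 [p1 [e1 f1]]]; exists (c *: v1); split; first exact: PolH_scale.
  rewrite -!scalerAl -!scalerAr -!scalerBr e1 f1.
  by rewrite scalerAl scalerAr.
- exact: Anti_Q.
Qed.


Variable f : {poly C}.
Hypothesis hEF : E * F - F * E = horner_alg H f.
Hypothesis hspan : forall r : A, exists n (c : nat -> nat -> nat -> C),
  r = \sum_(i < n) \sum_(j < n) \sum_(k < n) c i j k *: (F ^+ i * H ^+ j * E ^+ k).
Variable v : A.
Hypothesis hvP : PolH v.
Hypothesis hvE : v * E - E * v = (horner_alg H f *+ 2) * E.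
Hypothesis hvF : F * v - v * F = F * (horner_alg H f *+ 2).

Definition Om := F * E *+ 2 + v.

Lemma comm_center z : z * E = E * z -> z * F = F * z -> z * H = H * z -> center z.
Proof.
move=> hE hF hH r; have [n [c ->]] := hspan r; symmetry.
apply: commr_sum => i _; apply: commr_sum => j _; apply: commr_sum => k _.
rewrite /GRing.comm -scalerAr -scalerAl; congr (_ *: _).
by apply: commrM; [apply: commrM|]; apply: commrX.
Qed.

Lemma eEF : E * F = F * E + horner_alg H f.
Proof. by rewrite -hEF addrC subrK. Qed.

Lemma Om_E : Om * E = E * Om.
Proof.
rewrite /Om mulrDl mulrDr.
have -> : v * E = (horner_alg H f *+ 2) * E + E * v by rewrite -hvE subrK.
rewrite [(_ *+ 2) * E]mulrnAl [E * (_ *+ 2)]mulrnAr mulrA eEF [(F * E + _) * E]mulrDl mulrnDl -addrA [(_ *+ 2) * E]mulrnAl.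
by rewrite !addrA.
Qed.

Lemma Om_F : Om * F = F * Om.
Proof.
rewrite /Om mulrDl mulrDr.
have -> : F * v = F * (horner_alg H f *+ 2) + v * F by rewrite -hvF subrK.
rewrite mulrnAl mulrnAr -[F * E * F]mulrA eEF mulrDr mulrnDl.
by rewrite [F * (F * E)]mulrA -addrA mulrnAr.
Qed.

Lemma Om_H : Om * H = H * Om.
Proof.
rewrite /Om mulrDl mulrDr mulrnAl mulrnAr; congr (_ + _); last first.
  by rewrite PolH_commH.
congr (_ *+ 2).
by rewrite -mulrA hEH mulrA mulrBr mulr1 hFH [(H + 1) * F]mulrDl mul1r addrK mulrA.
Qed.

Lemma Om_center : center Om.
Proof. exact: comm_center Om_E Om_F Om_H. Qed.


Definition KK (x : A) := left_ideal (ker_eta E a) x.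
Definition T (x : A) := exists y, Wall y /\ KK (x - y).

Lemma K_Ea x : KK (x * (E - a%:A)).
Proof.
apply: li_single; exists ('X - a%:P); split; first by rewrite !hornerE subrr.
by rewrite rmorphB /= horner_algX horner_algC.
Qed.

Lemma K_Ek x k : KK (x * (E ^+ k - (a ^+ k)%:A)).
Proof.
apply: li_single; exists ('X ^+ k - (a ^+ k)%:P); split; first by rewrite !hornerE subrr.
by rewrite rmorphB rmorphXn /= horner_algX horner_algC.
Qed.

Lemma Wall_sub x y : Wall x -> Wall y -> Wall (x - y).
Proof. by move=> hx hy; apply: Wall_add => //; rewrite -scaleN1r; apply: Wall_scale. Qed.

Lemma T_add x y : T x -> T y -> T (x + y).
Proof.
move=> [y1 [h1 k1]] [y2 [h2 k2]]; exists (y1 + y2); split; first exact: Wall_add.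
by rewrite opprD addrACA; apply: li_add.
Qed.

Lemma T_scale c x : T x -> T (c *: x).
Proof.
move=> [y1 [h1 k1]]; exists (c *: y1); split; first exact: Wall_scale.
by rewrite -scalerBr; apply: li_scale.
Qed.

Lemma T_W x : Wall x -> T x.
Proof. by move=> hx; exists x; split => //; rewrite subrr; apply: li0. Qed.

Lemma T_K x : KK x -> T x.
Proof. by move=> hx; exists 0; split; [apply: Wall0 | rewrite subr0]. Qed.

Lemma T_zgF z g : center z -> PolH g -> T (z * g * F).
Proof.
move=> hz hg.
have h2 : (2%:R : C) != 0 by rewrite pnatr_eq0.
have e1 : (z * Om) * g - z * (g * v) = (z * g * (F * E)) *+ 2.
  by rewrite -mulrA -Om_center mulrA [z * (g * v)]mulrA -mulrBr /Om addrK mulrnAr.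
have -> : z * g * F = a^-1 *: (2%:R^-1 *: ((z * Om) * g - z * (g * v)))
                     + (- a^-1) *: (z * g * F * (E - a%:A)).
  have e2 : (2%:R : C)^-1 *: ((z * g * (F * E)) *+ 2) = z * g * (F * E).
    by rewrite -scaler_nat scalerA mulVf // scale1r.
  rewrite e1 e2 scaleNr -scalerBr.
  rewrite mulrA -mulrBr opprB addrC subrK mulr_algr scalerA mulVf //.
  by rewrite scale1r.
apply: T_add; last by apply: T_scale; apply: T_K; apply: K_Ea.
apply: T_scale; apply: T_scale; apply: T_W; apply: Wall_sub.
  by apply: Wall_zg => //; apply: centerM => //; apply: Om_center.
by apply: Wall_zg => //; apply: PolH_mul.
Qed.

Lemma T_Fy y : Wall y -> T (F * y).
Proof.
move=> [n hy]; apply: (hy (fun y => T (F * y))).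
- by rewrite mulr0; apply: T_W; apply: Wall0.
- by move=> x1 x2 h1 h2; rewrite mulrDr; apply: T_add.
- move=> y' [z [j [hz [hj ->]]]].
  rewrite mulrA hz -mulrA FQ mulrA; apply: T_zgF => //.
  exact: PolH_Qc.
Qed.

Lemma T_Fmul x : T x -> T (F * x).
Proof.
move=> [y [hy kx]].
have -> : F * x = F * (x - y) + F * y by rewrite mulrBr subrK.
apply: T_add; first by apply: T_K; apply: li_mull.
exact: T_Fy.
Qed.

Lemma T_Hmul x : T x -> T (H * x).
Proof.
move=> [y [hy kx]]; exists (H * y); split.
  by apply: Wall_mulPol => //; apply: PolH_H.
by rewrite -mulrBr; apply: li_mull.
Qed.

Lemma T_mon i j k : T (F ^+ i * H ^+ j * E ^+ k).
Proof.
have hHj : T (H ^+ j).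
  elim: j => [|j IH]; last by rewrite exprS; apply: T_Hmul.
  apply: T_W; exists 1%N; rewrite expr0 -(Q0 0) -[Q 0 0]mul1r.
  by apply: W_gen' => //; apply: center1.
have hFHj : T (F ^+ i * H ^+ j).
  elim: i => [|i IH]; first by rewrite expr0 mul1r.
  by rewrite exprS -mulrA; apply: T_Fmul.
have -> : F ^+ i * H ^+ j * E ^+ k =
   (a ^+ k) *: (F ^+ i * H ^+ j) + F ^+ i * H ^+ j * (E ^+ k - (a ^+ k)%:A).
  by rewrite mulrBr mulr_algr addrC subrK.
apply: T_add; first exact: T_scale.
by apply: T_K; apply: K_Ek.
Qed.

Lemma T_all r : T r.
Proof.
have [n [c ->]] := hspan r.
have T0 : T 0 by apply: T_W; apply: Wall0.
apply: big_ind => // [x y|i _]; first exact: T_add.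
apply: big_ind => // [x y|j _]; first exact: T_add.
apply: big_ind => // [x y|k _]; first exact: T_add.
by apply: T_scale; apply: T_mon.
Qed.

End Main.

End Helpers.
Import Helpers.
Unset Implicit Arguments.

Theorem mainTheorem1
  (f : {poly CC_numClosedField})
  (A : algType CC_numClosedField) (E F H : A)
  (hA : is_Rf f E F H)
  (a : CC_numClosedField) (ha : a != 0)           (* a = eta(E) *)
  (V : lmodType CC_numClosedField) (act : A -> V -> V)
  (hV : is_module act)
  (w : V)
  (hw : act E w = a *: w)                          (* w is a Whittaker vector *)
  (hcyc : forall v : V, exists r : A, v = act r w) (* V = R w *)
  : forall r : A,
      ann_vec act w r <->
      exists x y : A,
        left_ideal (Z_V act) x /\ left_ideal (ker_eta E a) y /\ r = x + y.
Proof.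
move=> r.
case: hA => hEF hHE hHF [hspan _].
case: hV => hDl hDr hM h1 hZ.
have hEH : E * H = (H - 1) * E.
  have e : E * H = H * E - (H * E - E * H) by rewrite opprB addrC subrK.
  by rewrite e hHE mulrBl mul1r.
have hFH : F * H = (H + 1) * F.
  have e : F * H = H * F - (H * F - F * H) by rewrite opprB addrC subrK.
  by rewrite e hHF opprK mulrDl mul1r.
have hP : PolH H (horner_alg H f *+ 2).
  by rewrite mulr2n; apply: PolH_add; apply: PolH_horner.
have [v [hvP [hvE hvF]]] := Anti_all hEH hFH hP.
split.
- move=> h0.
  have [y [[n hy] hk]] := T_all hEH hFH ha hEF hspan hvP hvE hvF r.
  have hk0 := kill_K hDl hDr hM h1 hZ hw hk.
  have hyw : act y w = 0.
    have e : act r w = act (r - y) w + act y w by rewrite -hDl subrK.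
    by move: e; rewrite h0 hk0 add0r => <-.
  exists y, (r - y); split; first exact: (W_ann hEH hDl hDr hM h1 hZ ha hw hcyc hy hyw).
  by split => //; rewrite addrC subrK.
- move=> [x [y [hx [hy ->]]]].
  by rewrite /ann_vec hDl (kill_LZ hDl hDr hM w hx) (kill_K hDl hDr hM h1 hZ hw hy) addr0.
Qed.
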